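(* Let $(G,N,\theta)_{\mathcal{H}}$ be a modular $\mathcal{H}$-triple, $E=\mathbb{F}_p[\theta]$, $\bar G=G/N$ acting on $E$ by $z^{gN}=z^{\sigma_g}$. Choose a representation $X$ affording $\theta$ realized over $E$, let $A$ be the associated $G$-algebra, choose a unitary embedding $\iota:A\to\mathrm{M}_{ms}(\mathbb{F}_p)$ and a function $Y:G\to\mathrm{GL}_{ms}(\mathbb{F}_p)$ with the properties below, and let $\bar\alpha\in\mathbf{Z}^2(\bar G,E^\times)$ be defined by $Y(g)Y(h)=Y(gh)\iota(\bar\alpha(gN,hN)1_A)$. Then the cohomology class $[\bar\alpha]\in\mathbf{H}^2(\bar G,E^\times)$ does not depend on the choices of $X$, $\iota$ and $Y$; it is determined by the $\mathcal{H}$-triple.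
   Context: $p$ prime; $F$ a sufficiently large finite field of characteristic $p$ (residue field of a $p$-modular system), $\mathcal{H}$ a group of automorphisms acting on $F$ and inducing all automorphisms of $F$. Modular $\mathcal{H}$-triple: $N\trianglelefteq G$ finite, $\theta\in\mathrm{IBr}(N)$ with $G$-stable $\mathcal{H}$-orbit. $E=\mathbb{F}_p[\theta]$: subfield of $F$ generated by reductions of values of $\theta$; $m=\theta(1)$, $s=[E:\mathbb{F}_p]$. For $g\in G$, $\sigma_g\in\mathrm{Gal}(E/\mathbb{F}_p)$ is the unique element such that $n\mapsto X(gng^{-1})^{\sigma_g}$ affords $\theta$ (it is independent of $X$, being the restriction of any $\tau\in\mathcal{H}$ with $\theta^\tau=\theta^{g^{-1}}$). Associated $G$-algebra: $A=\mathrm{M}_m(E)$ with $x^g=T_g^{-1}x^{\sigma_g}T_g$ where $X(gng^{-1})^{\sigma_g}=T_gX(n)T_g^{-1}$ for all $n$. Properties of $Y$: $Y(g)^{-1}\iota(x)Y(g)=\iota(x^g)$; $Y(n)=\iota(X(n))$ for $n\in N$; $Y(gn)=Y(g)Y(n)$, $Y(ng)=Y(n)Y(g)$. Then $Y(gh)^{-1}Y(g)Y(h)\in\iota(E^\times 1_A)$ and the resulting $\alpha(g,h)\in E^\times$ depends only on the cosets $gN,hN$, giving $\bar\alpha$. Factor sets $\beta\in\mathbf{Z}^2(\bar G,E^\times)$ satisfy $\beta(xy,z)\beta(x,y)^z=\beta(x,yz)\beta(y,z)$; $\beta,\beta'$ are cohomologous if $\beta'(x,y)=\beta(x,y)\gamma(x)^y\gamma(y)\gamma(xy)^{-1}$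 for some $\gamma:\bar G\to E^\times$; $\mathbf{H}^2$ is the group of classes. *)

(* Defs.v *)
From HB Require Import structures.
From mathcomp Require Import all_boot all_order all_algebra all_fingroup all_solvable all_field all_character.
Set Implicit Arguments. Unset Strict Implicit. Unset Printing Implicit Defensive.
Import GRing.Theory.
Local Open Scope ring_scope.

Definition is_subfield_set (F : finFieldType) (S : {set F}) : bool :=
  [&& (1 : F) \in S,
      [forall x in S, [forall y in S, (x - y \in S) && (x * y \in S)]]
    & [forall x in S, x^-1 \in S]].

Definition gen_subfield (F : finFieldType) (A : {set F}) : {set F} :=
  [set z : F | [forall S : {set F}, (is_subfield_set S && (A \subset S)) ==> (z \in S)]].

(* E = F_p[theta]: the subfield generated by the reductions of the values of
   theta, i.e. by the traces of a representation affording theta. *)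
Definition trace_field (F : finFieldType) (gT : finGroupType) (N : {group gT})
  (m : nat) (rX : mx_representation F N m) : {set F} :=
  gen_subfield [set \tr (rX n) | n in N].

(* x is a matrix with entries in E, i.e. x belongs to A = M_m(E). *)
Definition mx_over_set (F : finFieldType) (m : nat) (E : {set F}) (x : 'M[F]_m) : Prop :=
  forall i j, x i j \in E.

Definition similar_on (F : finFieldType) (gT : finGroupType) (N : {set gT}) (m : nat)
  (X Z : gT -> 'M[F]_m) : Prop :=
  exists2 P : 'M[F]_m, P \in unitmx & forall n, n \in N -> X n *m P = P *m Z n.

(* (G, N, theta)_H is a modular H-triple, where theta is afforded by rX0 and
   H induces all automorphisms of F; sigma g is a field automorphism tau of F
   with theta^tau = theta^(g^-1), i.e. n |-> X0(g n g^-1)^tau affords theta.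
   Its restriction to E is sigma_g. *)
Definition stable_orbit_sigma (F : finFieldType) (gT : finGroupType) (G N : {group gT})
  (m : nat) (rX0 : mx_representation F N m) (sigma : gT -> {rmorphism F -> F}) : Prop :=
  forall g, g \in G ->
    similar_on N (fun n => map_mx (sigma g) (rX0 (g * n * g^-1)%g)) rX0.

Definition admissible_choice (p : nat) (F : finFieldType) (gT : finGroupType)
  (G N : {group gT}) (m s : nat) (rX0 : mx_representation F N m)
  (sigma : gT -> {rmorphism F -> F})
  (X T : gT -> 'M[F]_m) (iota : 'M[F]_m -> 'M['F_p]_(m * s))
  (Y : gT -> 'M['F_p]_(m * s)) (alpha : gT -> gT -> F) : Prop :=
  let E := trace_field rX0 in
  [/\
   [/\ mx_repr N X, (forall n, n \in N -> mx_over_set E (X n)) & similar_on N X rX0],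
   (forall g, g \in G -> [/\ mx_over_set E (T g), T g \in unitmx &
       forall n, n \in N ->
         map_mx (sigma g) (X (g * n * g^-1)%g) = T g *m X n *m invmx (T g)]),
   [/\ iota 1%:M = 1%:M,
       (forall x y, mx_over_set E x -> mx_over_set E y -> iota (x + y) = iota x + iota y),
       (forall x y, mx_over_set E x -> mx_over_set E y -> iota (x *m y) = iota x *m iota y)
     & (forall x y, mx_over_set E x -> mx_over_set E y -> iota x = iota y -> x = y)],
   [/\ (forall g, g \in G -> Y g \in unitmx),
       (forall g x, g \in G -> mx_over_set E x ->
          invmx (Y g) *m iota x *m Y g
          = iota (invmx (T g) *m map_mx (sigma g) x *m T g)),
       (forall n, n \in N -> Y n = iota (X n)),
       (forall g n, g \in G -> n \in N -> Y (g * n)%g = Y g *m Y n)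
     & (forall g n, g \in G -> n \in N -> Y (n * g)%g = Y n *m Y g)]
   &
   (forall g h, g \in G -> h \in G ->
      [/\ alpha g h \in E, alpha g h != 0 &
          Y g *m Y h = Y (g * h)%g *m iota ((alpha g h)%:M)])].

(* alpha and alpha' (viewed on Gbar = G/N) define the same class in
   H^2(Gbar, E^x), with Gbar acting on E by z^{gN} = z^{sigma_g}. *)
Definition cohomologous (F : finFieldType) (gT : finGroupType) (G N : {group gT})
  (E : {set F}) (sigma : gT -> {rmorphism F -> F}) (a b : gT -> gT -> F) : Prop :=
  exists gamma : coset_of N -> F,
    (forall x, x \in (G / N)%g -> gamma x \in E /\ gamma x != 0) /\
    (forall g h, g \in G -> h \in G ->
       b g h = a g h * sigma h (gamma (coset N g)) * gamma (coset N h)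
               / gamma (coset N (g * h)%g)).

(* Main.v *)
Require Import Defs.
From HB Require Import structures.
From mathcomp Require Import all_boot all_order all_algebra all_fingroup all_solvable all_field all_character.
Import GRing.Theory.
Local Open Scope ring_scope.
Set Implicit Arguments. Unset Strict Implicit. Unset Printing Implicit Defensive.
Section Frob.
Variables (F : finFieldType) (p : nat) (chF : p \in [pchar F]).
Fixpoint frobn (k : nat) : {rmorphism F -> F} :=
  match k with 0 => GRing.RMorphism.clone _ _ idfun _
  | k'.+1 => GRing.RMorphism.clone _ _ (pFrobenius_aut chF \o frobn k') _ end.
Lemma frobnE k x : frobn k x = x ^+ (p ^ k).
Proof. elim: k x => [|k IH] x /=; first by rewrite expr1.
by rewrite IH pFrobenius_autE -exprM expnSr. Qed.
End Frob.

Section SubField.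
Variables (F : finFieldType) (E : {set F}).
Hypothesis Esub : is_subfield_set E.

Lemma E1 : (1 : F) \in E. Proof. by case/and3P: Esub. Qed.
Lemma EB x y : x \in E -> y \in E -> x - y \in E.
Proof. case/and3P: Esub => _ /forall_inP H _ xE yE.
by have /forall_inP/(_ y yE)/andP[] := H x xE. Qed.
Lemma EM x y : x \in E -> y \in E -> x * y \in E.
Proof. case/and3P: Esub => _ /forall_inP H _ xE yE.
by have /forall_inP/(_ y yE)/andP[] := H x xE. Qed.
Lemma EV x : x \in E -> x^-1 \in E.
Proof. by case/and3P: Esub => _ _ /forall_inP H /H. Qed.
Lemma E0 : (0 : F) \in E. Proof. by rewrite -(subrr 1) EB ?E1. Qed.
Lemma EN x : x \in E -> - x \in E. Proof. by move=> xE; rewrite -sub0r EB ?E0. Qed.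
Lemma ED x y : x \in E -> y \in E -> x + y \in E.
Proof. by move=> xE yE; rewrite -[y]opprK EB ?EN. Qed.
Lemma ESum (I : Type) (r : seq I) (P : pred I) (f : I -> F) :
  (forall i, P i -> f i \in E) -> \sum_(i <- r | P i) f i \in E.
Proof. move=> H; apply: (big_ind (fun x => x \in E)) => //; [exact: E0| exact: ED]. Qed.
Lemma EMn x k : x \in E -> x *+ k \in E.
Proof. by move=> xE; elim: k => [|k IH]; rewrite ?mulr0n ?E0 // mulrS ED. Qed.

Lemma E_card_gt1 : (1 < #|E|)%N.
Proof.
rewrite (cardsD1 0) E0 ltnS card_gt0; apply/set0Pn; exists 1.
by rewrite !inE oner_eq0 E1.
Qed.

Lemma E_expcard x : x \in E -> x ^+ #|E| = x.
Proof.
move=> xE; have [->|nz] := eqVneq x 0; first by rewrite expr0n; case: #|E| E_card_gt1.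
set E0s := E :\ 0.
have HE0 y : (y \in E0s) = (y != 0) && (y \in E) by rewrite !inE.
have xE0 : x \in E0s by rewrite HE0 nz.
have inj : {in E0s &, injective ( *%R x)} by move=> a b _ _ /mulfI; apply.
have im : [set x * y | y in E0s] = E0s.
  apply/eqP; rewrite eqEcard card_in_imset // leqnn andbT.
  apply/subsetP => _ /imsetP[y yE ->]; move: yE; rewrite !HE0 => /andP[ynz yE].
  by rewrite mulf_neq0 // EM.
have H : \prod_(y in E0s) y = x ^+ #|E0s| * \prod_(y in E0s) y.
  rewrite -prodr_const -big_split /=.
  by rewrite -(big_imset (fun y => y) inj) im.
have Pnz : \prod_(y in E0s) y != 0 by apply/prodf_neq0 => y; rewrite HE0 => /andP[].
have : x ^+ #|E0s| = 1.
  by apply: (mulIf Pnz); rewrite mul1r -H.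
rewrite (cardsD1 0 E) E0 /= add1n exprS => ->; exact: mulr1.
Qed.

Lemma E_expcardP x : (x ^+ #|E| == x) = (x \in E).
Proof.
apply/idP/idP => [/eqP hx|/E_expcard ->//].
apply/negPn/negP => xnE.
set q := #|E|.
have q1 := E_card_gt1.
pose P : {poly F} := 'X^q - 'X.
have szP : size P = q.+1 by rewrite /P size_polyDl ?size_polyXn // size_polyN size_polyX ltnS.
have Pnz : P != 0 by rewrite -size_poly_eq0 szP.
have := max_poly_roots Pnz (rs := x :: enum E).
rewrite /= szP -cardE ltnn => H; suff: false by []; apply: H.
  rewrite /root /P !hornerE hx subrr eqxx /=; apply/allP => y; rewrite mem_enum => yE.
  by rewrite /root !hornerE E_expcard // subrr.
by rewrite mem_enum xnE enum_uniq.
Qed.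

End SubField.
Section GenSub.
Variables (F : finFieldType) (A : {set F}).
Lemma gen_subfieldP z :
  reflect (forall S, is_subfield_set S -> A \subset S -> z \in S) (z \in gen_subfield A).
Proof.
rewrite inE; apply: (iffP forallP) => [H S sS AS|H S].
  by move/implyP: (H S); apply; rewrite sS.
by apply/implyP => /andP[]; apply: H.
Qed.
Lemma gen_subfield_sub : is_subfield_set (gen_subfield A).
Proof.
apply/and3P; split.
- by apply/gen_subfieldP => S sS _; apply: E1.
- apply/forall_inP => x /gen_subfieldP xE; apply/forall_inP => y /gen_subfieldP yE.
  by apply/andP; split; apply/gen_subfieldP => S sS AS;
    [apply: EB | apply: EM] => //; [apply: xE|apply: yE|apply: xE|apply: yE].
- apply/forall_inP => x /gen_subfieldP xE; apply/gen_subfieldP => S sS AS.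
  by apply: EV => //; apply: xE.
Qed.
Lemma gen_subfield_ext z : z \in A -> z \in gen_subfield A.
Proof. by move=> zA; apply/gen_subfieldP => S _ /subsetP; apply. Qed.
(* preimage under a ring morphism *)
Lemma gen_subfield_morph (f : {rmorphism F -> F}) :
  (forall a, a \in A -> f a \in A) -> forall z, z \in gen_subfield A -> f z \in gen_subfield A.
Proof.
move=> fA z /gen_subfieldP zE; apply/gen_subfieldP => S sS AS.
pose S' := [set x | f x \in S].
have: z \in S'; last by rewrite inE.
apply: zE.
  apply/and3P; split; first by rewrite inE rmorph1 E1.
    apply/forall_inP => x; rewrite inE => xS; apply/forall_inP => y; rewrite inE => yS.
    by rewrite !inE rmorphB rmorphM EB ?EM.
  by apply/forall_inP => x; rewrite !inE fmorphV => xS; rewrite EV.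
by apply/subsetP => a aA; rewrite inE (subsetP AS) ?fA.
Qed.
End GenSub.
Section MxE.
Variables (F : finFieldType) (E : {set F}).
Hypothesis Esub : is_subfield_set E.
Variable m : nat.
Implicit Types x y : 'M[F]_m.
Lemma mxE_add x y : mx_over_set E x -> mx_over_set E y -> mx_over_set E (x + y).
Proof. by move=> hx hy i j; rewrite mxE ED. Qed.
Lemma mxE_mul x y : mx_over_set E x -> mx_over_set E y -> mx_over_set E (x *m y).
Proof. by move=> hx hy i j; rewrite mxE ESum // => k _; rewrite EM. Qed.
Lemma mxE_scalar c : c \in E -> mx_over_set E (c%:M : 'M_m).
Proof. by move=> cE i j; rewrite mxE EMn. Qed.
Lemma mxE_delta a b : mx_over_set E (delta_mx a b : 'M_m).
Proof. by move=> i j; rewrite mxE EMn ?E1. Qed.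
Lemma mxE_0 : mx_over_set E (0 : 'M_m).
Proof. by move=> i j; rewrite mxE E0. Qed.
Lemma mxE_1 : mx_over_set E (1%:M : 'M_m).
Proof. exact: mxE_scalar (E1 Esub). Qed.
Lemma mxE_sum (I : Type) (r : seq I) (P : pred I) (f : I -> 'M_m) :
  (forall i, P i -> mx_over_set E (f i)) -> mx_over_set E (\sum_(i <- r | P i) f i).
Proof.
move=> H; apply: (big_ind (fun x => mx_over_set E x)) => //;
 [exact: mxE_0 | exact: mxE_add]. Qed.
End MxE.

Definition cab (F : fieldType) m (c : {ffun 'I_m -> F}) e (a b : 'I_m) :=
  [ffun j => if j == b then c a * e else 0].

Section Frame.
Variables (F : finFieldType) (E : {set F}).
Hypothesis Esub : is_subfield_set E.
Variables (p : nat) (pr : prime p) (m n : nat).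
Hypothesis cardV : (#|E| ^ m = p ^ n)%N.
Variable iota : 'M[F]_m -> 'M['F_p]_n.
Hypotheses (i1 : iota 1%:M = 1%:M)
  (iD : forall x y, mx_over_set E x -> mx_over_set E y -> iota (x + y) = iota x + iota y)
  (iM : forall x y, mx_over_set E x -> mx_over_set E y -> iota (x *m y) = iota x *m iota y)
  (iI : forall x y, mx_over_set E x -> mx_over_set E y -> iota x = iota y -> x = y).
Variable i0 : 'I_m.

Local Notation Ms c := (iota (c%:M)).
Ltac sE := try by first [ apply: (mxE_scalar Esub); done | apply: (mxE_delta Esub) | apply: (mxE_0 Esub) | assumption].
Local Notation Fu a b := (iota (delta_mx a b)).

Lemma iota0 : iota 0 = 0.
Proof.
have h := iD (mxE_0 Esub (m:=m)) (mxE_0 Esub (m:=m)); rewrite addr0 in h.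
by apply: (addrI (iota 0)); rewrite addr0 -h.
Qed.

Lemma iota_sum (I : Type) (r : seq I) (P : pred I) (f : I -> 'M_m) :
  (forall i, P i -> mx_over_set E (f i)) -> iota (\sum_(i <- r | P i) f i) = \sum_(i <- r | P i) iota (f i).
Proof.
move=> H; pose K x y := mx_over_set E x /\ iota x = y.
suff []: K (\sum_(i <- r | P i) f i) (\sum_(i <- r | P i) iota (f i)) by [].
apply: (big_rec2 K); first by split; [apply: mxE_0 | apply: iota0].
by move=> i x y Pi [hx <-]; split; [apply: mxE_add => //; apply: H | rewrite iD //; apply: H].
Qed.

Lemma Ms_mul c d : c \in E -> d \in E -> Ms c *m Ms d = Ms (c * d).
Proof. by move=> cE dE; rewrite -iM; sE; rewrite -scalar_mxM. Qed.
Lemma Ms_add c d : c \in E -> d \in E -> Ms c + Ms d = Ms (c + d).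
Proof. by move=> cE dE; rewrite -iD; sE; rewrite -raddfD. Qed.
Lemma Ms_comm c x : c \in E -> mx_over_set E x -> Ms c *m iota x = iota x *m Ms c.
Proof. by move=> cE xE; rewrite -!iM; sE; rewrite scalar_mxC. Qed.
Lemma Ms_inj c d : c \in E -> d \in E -> Ms c = Ms d -> c = d.
Proof.
move=> cE dE /iI H. have {H} := H (mxE_scalar Esub (m:=m) cE) (mxE_scalar Esub (m:=m) dE).
by move/matrixP/(_ i0 i0); rewrite !mxE eqxx !mulr1n.
Qed.
Lemma Ms1 : Ms 1 = 1%:M. Proof. exact: i1. Qed.
Lemma Ms0 : Ms 0 = 0. Proof. by rewrite raddf0 iota0. Qed.
Lemma Fu_mul a b b' c : Fu a b *m Fu b' c = if b == b' then Fu a c else 0.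
Proof. by rewrite -iM; sE; rewrite mul_delta_mx_cond; case: eqP; rewrite ?mulr1n ?mulr0n ?iota0. Qed.

Lemma iota_decomp x : mx_over_set E x ->
  iota x = \sum_a \sum_b Ms (x a b) *m Fu a b.
Proof.
move=> xE; rewrite {1}[x]matrix_sum_delta iota_sum => [|a _]; last first.
  by apply: (mxE_sum Esub) => b _ i j; rewrite mxE EM // (mxE_delta Esub).
apply: eq_bigr => a _; rewrite iota_sum => [|b _]; last first.
  by move=> i j; rewrite mxE EM // (mxE_delta Esub).
by apply: eq_bigr => b _; rewrite -iM; sE; rewrite mul_scalar_mx.
Qed.

Lemma Fu00_neq0 : Fu i0 i0 != 0.
Proof.
apply/eqP; rewrite -iota0 => /iI H.
have := H (mxE_delta Esub i0 i0) (mxE_0 Esub (m:=m)).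
by move/matrixP/(_ i0 i0); rewrite !mxE eqxx /= => /eqP; rewrite oner_eq0.
Qed.

Lemma frame_exists : exists v : 'rV['F_p]_n, v != 0 /\ v *m Fu i0 i0 = v.
Proof.
have [r hr] : exists r, row r (Fu i0 i0) != 0.
  apply/existsP; apply: contraR Fu00_neq0; rewrite negb_exists => /forallP H.
  by apply/eqP/row_matrixP => r; rewrite row0; apply/eqP/negPn/H.
exists (row r (Fu i0 i0)); split => //.
by rewrite -row_mul Fu_mul eqxx.
Qed.

Variable v : 'rV['F_p]_n.
Hypotheses (vnz : v != 0) (vP : v *m Fu i0 i0 = v).

Definition Psi (c : {ffun 'I_m -> F}) := \sum_j v *m Ms (c j) *m Fu i0 j.

Lemma Psi_proj c k : c \in ffun_on E -> Psi c *m Fu k i0 = v *m Ms (c k).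
Proof.
move=> /ffun_onP cE; rewrite /Psi mulmx_suml (bigD1 k) //= big1 => [|j jk].
  rewrite addr0 -!mulmxA Fu_mul eqxx Ms_comm //; last exact: (mxE_delta Esub).
  by rewrite mulmxA vP.
by rewrite -!mulmxA Fu_mul (negPf jk) !mulmx0.
Qed.

Lemma v_Ms_inj c d : c \in E -> d \in E -> v *m Ms c = v *m Ms d -> c = d.
Proof.
move=> cE dE H; apply/eqP; rewrite -subr_eq0; apply/negPn/negP => nz.
have cdE : c - d \in E by rewrite EB.
have : v *m Ms (c - d) = 0.
  have e : Ms c = Ms (c - d) + Ms d by rewrite Ms_add ?subrK.
  by rewrite -[Ms (c - d)](addrK (Ms d)) -e mulmxBr H subrr.
move/(congr1 (mulmx^~ (Ms (c - d)^-1))); rewrite -mulmxA Ms_mul ?EV // divff //.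
by rewrite Ms1 mulmx1 mul0mx => /eqP; rewrite (negPf vnz).
Qed.

Lemma Psi_inj : {in ffun_on E &, injective Psi}.
Proof.
move=> c d cE dE H; apply/ffunP => k; move/ffun_onP: (cE) => /(_ k) ckE.
move/ffun_onP: (dE) => /(_ k) dkE.
apply: (v_Ms_inj ckE dkE); by rewrite -(@Psi_proj c k cE) -(@Psi_proj d k dE) H.
Qed.

Lemma Psi_surj w : exists2 c, c \in ffun_on E & w = Psi c.
Proof.
have : w \in Psi @: ffun_on E.
  suff -> : Psi @: ffun_on E = setT by rewrite inE.
  apply/eqP; rewrite eqEcard subsetT cardsT card_in_imset; last exact: Psi_inj.
  by rewrite card_ffun_on card_ord cardV /= card_mx card_Fp // mul1n.
by case/imsetP => c cE ->; exists c.
Qed.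

Lemma ffun_onE (c : {ffun 'I_m -> F}) : (c \in ffun_on E) -> forall j, c j \in E.
Proof. by move/ffun_onP. Qed.

Lemma Psi_add c d : c \in ffun_on E -> d \in ffun_on E -> Psi (c + d) = Psi c + Psi d.
Proof.
move=> /ffun_onE cE /ffun_onE dE; rewrite /Psi -big_split; apply: eq_bigr => j _ /=.
by rewrite ffunE -Ms_add // mulmxDr mulmxDl.
Qed.

Lemma ffun_on_add (c d : {ffun 'I_m -> F}) : c \in ffun_on E -> d \in ffun_on E -> c + d \in ffun_on E.
Proof. by move=> /ffun_onE cE /ffun_onE dE; apply/ffun_onP => j; rewrite ffunE ED. Qed.
Lemma ffun_on0 : (0 : {ffun 'I_m -> F}) \in ffun_on E.
Proof. by apply/ffun_onP => j; rewrite ffunE E0. Qed.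
Lemma ffun_on_muln (c : {ffun 'I_m -> F}) k : c \in ffun_on E -> c *+ k \in ffun_on E.
Proof. by move=> /ffun_onE cE; apply/ffun_onP => j; rewrite ffunMnE EMn. Qed.

Lemma Psi0 : Psi 0 = 0.
Proof. by rewrite /Psi big1 // => j _; rewrite ffunE Ms0 mulmx0 mul0mx. Qed.

Lemma Psi_muln c k : c \in ffun_on E -> Psi (c *+ k) = Psi c *+ k.
Proof.
move=> cE; elim: k => [|k IH]; first by rewrite !mulr0n Psi0.
by rewrite !mulrS Psi_add ?ffun_on_muln // IH.
Qed.

Lemma Psi_sum (I : Type) (r : seq I) (P : pred I) (f : I -> {ffun 'I_m -> F}) :
  (forall i, P i -> f i \in ffun_on E) ->
  Psi (\sum_(i <- r | P i) f i) = \sum_(i <- r | P i) Psi (f i).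
Proof.
move=> H; pose K x y := x \in ffun_on E /\ Psi x = y.
suff []: K (\sum_(i <- r | P i) f i) (\sum_(i <- r | P i) Psi (f i)) by [].
apply: (big_rec2 K); first by split; [apply: ffun_on0 | apply: Psi0].
by move=> i x y Pi [hx <-]; split; [apply: ffun_on_add => //; apply: H | rewrite Psi_add //; apply: H].
Qed.

Lemma Psi_scale (a : 'F_p) c : c \in ffun_on E -> a *: Psi c = Psi (c *+ a).
Proof. by move=> cE; rewrite Psi_muln // -scaler_nat natr_Zp. Qed.

Lemma Psi_Ms c e : c \in ffun_on E -> e \in E ->
  Psi c *m Ms e = Psi [ffun j => c j * e].
Proof.
move=> /ffun_onE cE eE; rewrite /Psi mulmx_suml; apply: eq_bigr => j _.
by rewrite ffunE -!mulmxA -Ms_comm; [rewrite (mulmxA (Ms _)) Ms_mul | | apply: (mxE_delta Esub)].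
Qed.

Lemma Psi_Fu c a b : c \in ffun_on E ->
  Psi c *m Fu a b = Psi [ffun j => if j == b then c a else 0].
Proof.
move=> /ffun_onE cE; rewrite /Psi mulmx_suml (bigD1 a) //= big1 => [|j ja]; last first.
  by rewrite -mulmxA Fu_mul (negPf ja) mulmx0.
rewrite (bigD1 b) //= big1 => [|j jb]; last by rewrite ffunE (negPf jb) Ms0 mulmx0 mul0mx.
by rewrite !addr0 ffunE eqxx -mulmxA Fu_mul eqxx.
Qed.

Lemma cab_on (c : {ffun 'I_m -> F}) e a b : c \in ffun_on E -> e \in E -> cab c e a b \in ffun_on E.
Proof. by move=> /ffun_onE cE eE; apply/ffun_onP => j; rewrite ffunE; case: eqP; rewrite ?E0 ?EM. Qed.

Lemma Psi_iota c x : c \in ffun_on E -> mx_over_set E x ->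
  Psi c *m iota x = \sum_a \sum_b Psi (cab c (x a b) a b).
Proof.
move=> cE xE; rewrite iota_decomp // mulmx_sumr; apply: eq_bigr => a _.
rewrite mulmx_sumr; apply: eq_bigr => b _.
rewrite mulmxA Psi_Ms // Psi_Fu; last by apply/ffun_onP => j; rewrite ffunE EM ?(ffun_onE cE).
by congr Psi; apply/ffunP => j; rewrite !ffunE.
Qed.

Lemma rowv_ext k (A B : 'M['F_p]_(k, n)) : (forall w : 'rV_k, w *m A = w *m B) -> A = B.
Proof. by move=> H; apply/row_matrixP => i; rewrite !rowE H. Qed.

Lemma frame_center Z : (forall x, mx_over_set E x -> Z *m iota x = iota x *m Z) ->
  exists2 d, d \in E & Z = Ms d.
Proof.
move=> HZ; have [c cE vZ] := Psi_surj (v *m Z).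
have cE' := ffun_onE cE.
have vZd : v *m Z = v *m Ms (c i0).
  by rewrite -Psi_proj // -vZ -{1}vP -!mulmxA -HZ //; apply: (mxE_delta Esub).
exists (c i0) => //; apply: rowv_ext => w; have [e eE ->] := Psi_surj w.
have eE' := ffun_onE eE.
rewrite /Psi !mulmx_suml; apply: eq_bigr => j _.
rewrite -!mulmxA -HZ; last exact: (mxE_delta Esub).
rewrite (mulmxA (Ms _) Z) -HZ; last exact: (mxE_scalar Esub).
rewrite !mulmxA vZd -!mulmxA; congr (_ *m _).
rewrite -Ms_comm; [| done | exact: (mxE_delta Esub)].
by rewrite !mulmxA Ms_comm //; apply: (mxE_scalar Esub).
Qed.

End Frame.

Section SN.
Variables (F : finFieldType) (E : {set F}).
Hypothesis Esub : is_subfield_set E.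
Variables (p : nat) (pr : prime p) (m n : nat).
Hypothesis cardV : (#|E| ^ m = p ^ n)%N.
Variable i0 : 'I_m.

Lemma SN_half (iota1 iota2 : 'M[F]_m -> 'M['F_p]_n)
  (i11 : iota1 1%:M = 1%:M)
  (i1D : forall x y, mx_over_set E x -> mx_over_set E y -> iota1 (x + y) = iota1 x + iota1 y)
  (i1M : forall x y, mx_over_set E x -> mx_over_set E y -> iota1 (x *m y) = iota1 x *m iota1 y)
  (i2D : forall x y, mx_over_set E x -> mx_over_set E y -> iota2 (x + y) = iota2 x + iota2 y)
  (v1 v2 : 'rV['F_p]_n) : v1 != 0 -> v1 *m iota1 (delta_mx i0 i0) = v1 ->
  exists Q, forall c, c \in ffun_on E -> Psi iota1 i0 v1 c *m Q = Psi iota2 i0 v2 c.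
Proof.
move=> v1nz v1P.
have [C HC] : exists C : 'I_n -> {ffun 'I_m -> F},
    forall i, C i \in ffun_on E /\ delta_mx 0 i = Psi iota1 i0 v1 (C i).
  apply: (@fin_all_exists _ (fun _ => {ffun 'I_m -> F})
    (fun i c => c \in ffun_on E /\ delta_mx 0 i = Psi iota1 i0 v1 c)) => i.
  by have [c cE ->] := Psi_surj Esub pr cardV i11 i1D i1M v1nz v1P (delta_mx 0 i); exists c.
exists (\matrix_(i, j) (Psi iota2 i0 v2 (C i)) 0 j) => c cE.
set w := Psi iota1 i0 v1 c.
have CE i : C i \in ffun_on E by case: (HC i).
pose c' := \sum_i C i *+ (w 0 i : 'F_p).
have CmE i : C i *+ (w 0 i : 'F_p) \in ffun_on E by apply: ffun_on_muln.
have c'E : c' \in ffun_on E.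
  rewrite /c'; apply: (big_ind (fun x => x \in ffun_on E)) => //.
  - exact: ffun_on0.
  - by move=> x y; apply: ffun_on_add.
have ec : c = c'.
  apply: (Psi_inj Esub i11 i1D i1M v1nz v1P cE c'E).
  rewrite -/w {1}[w]row_sum_delta /c' (Psi_sum Esub i1D) //.
  by apply: eq_bigr => i _; case: (HC i) => _ ->; rewrite (Psi_scale Esub i1D).
rewrite mulmx_sum_row ec /c' (Psi_sum Esub i2D) //.
apply: eq_bigr => i _; rewrite -(Psi_scale Esub i2D) //; congr (_ *: _).
by apply/rowP => j; rewrite !mxE.
Qed.

Variables iota1 iota2 : 'M[F]_m -> 'M['F_p]_n.
Hypotheses (i11 : iota1 1%:M = 1%:M)
  (i1D : forall x y, mx_over_set E x -> mx_over_set E y -> iota1 (x + y) = iota1 x + iota1 y)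
  (i1M : forall x y, mx_over_set E x -> mx_over_set E y -> iota1 (x *m y) = iota1 x *m iota1 y)
  (i1I : forall x y, mx_over_set E x -> mx_over_set E y -> iota1 x = iota1 y -> x = y).
Hypotheses (i21 : iota2 1%:M = 1%:M)
  (i2D : forall x y, mx_over_set E x -> mx_over_set E y -> iota2 (x + y) = iota2 x + iota2 y)
  (i2M : forall x y, mx_over_set E x -> mx_over_set E y -> iota2 (x *m y) = iota2 x *m iota2 y)
  (i2I : forall x y, mx_over_set E x -> mx_over_set E y -> iota2 x = iota2 y -> x = y).

Lemma SN : exists2 Q, Q \in unitmx & forall x, mx_over_set E x -> iota1 x *m Q = Q *m iota2 x.
Proof.
have [v1 [v1nz v1P]] := frame_exists Esub i1D i1M i1I i0.
have [v2 [v2nz v2P]] := frame_exists Esub i2D i2M i2I i0.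
have [Q HQ] := SN_half i11 i1D i1M i2D v2 v1nz v1P.
have [Q' HQ'] := SN_half i21 i2D i2M i1D v1 v2nz v2P.
have QQ' : Q *m Q' = 1%:M.
  apply: rowv_ext => w.
  have [c cE ->] := Psi_surj Esub pr cardV i11 i1D i1M v1nz v1P w.
  by rewrite mulmxA HQ // HQ' // mulmx1.
exists Q; first by case: (mulmx1_unit QQ').
move=> x xE; apply: rowv_ext => w.
have [c cE ->] := Psi_surj Esub pr cardV i11 i1D i1M v1nz v1P w.
rewrite !mulmxA (Psi_iota Esub i1D i1M) // HQ // mulmx_suml (Psi_iota Esub i2D i2M) //.
apply: eq_bigr => a _; rewrite mulmx_suml; apply: eq_bigr => b _.
by rewrite HQ // cab_on // xE.
Qed.
End SN.

Lemma mxtrace_map_rm (F : fieldType) m (f : {rmorphism F -> F}) (A : 'M[F]_m) :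
  \tr (map_mx f A) = f (\tr A).
Proof. by rewrite /mxtrace rmorph_sum; apply: eq_bigr => i _; rewrite mxE. Qed.

Lemma mxtrace_sim (F : fieldType) m (A B P : 'M[F]_m) :
  P \in unitmx -> A *m P = P *m B -> \tr A = \tr B.
Proof.
move=> Pu H; rewrite -[A](mulmxK Pu) H -mulmxA mxtrace_mulC -mulmxA.
by rewrite mulVmx // mulmx1.
Qed.

Lemma sim_conj (F : fieldType) m (A B P : 'M[F]_m) :
  P \in unitmx -> A *m P = P *m B -> invmx P *m A = B *m invmx P.
Proof.
move=> Pu H; apply: (canRL (mulmxK Pu)); by rewrite -!mulmxA H mulKmx.
Qed.

Section Schur.
Variables (F : finFieldType) (gT : finGroupType) (N : {group gT}) (m : nat)
  (rX0 : mx_representation F N m).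
Hypothesis absirr : mx_absolutely_irreducible rX0.

Lemma schur_sim (X : gT -> 'M[F]_m) : similar_on N X rX0 ->
  forall Z, (forall n, n \in N -> Z *m X n = X n *m Z) -> exists a, Z = a%:M.
Proof.
case=> P Pu HP Z HZ.
have: is_scalar_mx (invmx P *m Z *m P).
  apply: (mx_abs_irr_cent_scalar absirr); apply/centgmxP => x xN.
  rewrite -!mulmxA -HP // (mulmxA Z) HZ // -(mulmxA (X x)) (mulmxA (invmx P) (X x)).
  by rewrite (sim_conj Pu (HP x xN)) !mulmxA.
case/is_scalar_mxP => a Ha; exists a.
have -> : Z = P *m (invmx P *m Z *m P) *m invmx P by rewrite !mulmxA mulmxV // mul1mx mulmxK.
by rewrite Ha scalar_mxC mulmxK.
Qed.
End Schur.

Section Desc.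
Variables (F : finFieldType) (p : nat) (chF : p \in [pchar F]) (gT : finGroupType)
  (N : {group gT}) (m : nat) (rX0 : mx_representation F N m) (s : nat).
Hypothesis absirr : mx_absolutely_irreducible rX0.
Hypothesis cardE : #|trace_field rX0| = (p ^ s)%N.
Local Notation E := (trace_field rX0).
Lemma Esub : is_subfield_set E. Proof. exact: gen_subfield_sub. Qed.
Local Notation tau := (frobn chF s).

Lemma tauE x : (tau x == x) = (x \in E).
Proof. by rewrite frobnE -cardE E_expcardP //; apply: Esub. Qed.

Lemma mxE_tau (A : 'M[F]_m) : mx_over_set E A <-> map_mx tau A = A.
Proof.
split=> [H|H i j]; first by apply/matrixP => i j; rewrite mxE; apply/eqP; rewrite tauE.
by rewrite -tauE -{2}H mxE.
Qed.

Lemma mxE_inv (A : 'M[F]_m) : mx_over_set E A -> mx_over_set E (invmx A).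
Proof. by move/mxE_tau => H; apply/mxE_tau; rewrite map_invmx H. Qed.

Lemma m_gt0 : (0 < m)%N. Proof. by case/andP: absirr. Qed.

Lemma descent (X1 X2 : gT -> 'M[F]_m) :
  (forall n, n \in N -> mx_over_set E (X1 n)) ->
  (forall n, n \in N -> mx_over_set E (X2 n)) ->
  similar_on N X1 rX0 -> similar_on N X2 rX0 ->
  exists P, [/\ P \in unitmx, mx_over_set E P & forall n, n \in N -> X1 n *m P = P *m X2 n].
Proof.
move=> X1E X2E [P1 P1u H1] s2; have [P2 P2u H2] := s2.
pose P' := P1 *m invmx P2.
have P'u : P' \in unitmx by rewrite unitmx_mul P1u unitmx_inv.
have HP' n : n \in N -> X1 n *m P' = P' *m X2 n.
  move=> nN; rewrite /P' mulmxA H1 // -!mulmxA; congr (_ *m _).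
  by rewrite (sim_conj P2u (H2 n nN)).
have [i [j nzij]] : exists i, exists j, P' i j != 0.
  suff /existsP[i /existsP[j h]] : [exists i, exists j, P' i j != 0] by exists i, j.
  apply: contraTT P'u; rewrite negb_exists => /forallP Hi.
  have -> : P' = 0.
    apply/matrixP => i j; move: (Hi i); rewrite negb_exists => /forallP /(_ j).
    by rewrite negbK => /eqP ->; rewrite [RHS]mxE.
  apply/negP => u0; have := mulmxV u0; rewrite mul0mx => /matrixP.
  by move/(_ (Ordinal m_gt0) (Ordinal m_gt0)); rewrite !mxE eqxx /= => /eqP; rewrite eq_sym oner_eq0.
pose P := (P' i j)^-1 *: P'.
have Pu : P \in unitmx by rewrite unitmxZ ?unitfE ?invr_eq0.
have HP n : n \in N -> X1 n *m P = P *m X2 n.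
  by move=> nN; rewrite /P -scalemxAl -scalemxAr HP'.
have Pij : P i j = 1 by rewrite mxE mulVf.
pose tP := map_mx tau P.
have HtP n : n \in N -> X1 n *m tP = tP *m X2 n.
  move=> nN; move/mxE_tau: (X1E n nN) => e1; move/mxE_tau: (X2E n nN) => e2.
  by rewrite /tP -e1 -e2 -!map_mxM HP.
have [a Ha] : exists a, invmx P *m tP = a%:M.
  apply: (schur_sim absirr (X := X2) s2) => n nN.
  rewrite -mulmxA -HtP // mulmxA (sim_conj Pu (HP n nN)) -!mulmxA //.
have tPP : tP = a *: P by rewrite -mul_mx_scalar -Ha mulKVmx.
have a1 : a = 1.
  move/matrixP: (tPP) => /(_ i j); rewrite /tP [LHS]mxE [RHS]mxE Pij rmorph1 mulr1.
  by move=> ->.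
exists P; split=> //; apply/mxE_tau; by rewrite -/tP tPP a1 scale1r.
Qed.
End Desc.

Section Sig.
Variables (F : finFieldType) (gT : finGroupType) (G N : {group gT}) (m : nat)
  (rX0 : mx_representation F N m) (sigma : gT -> {rmorphism F -> F}).
Hypotheses (nNG : (N <| G)%g) (stab : stable_orbit_sigma G rX0 sigma).
Local Notation E := (trace_field rX0).

Lemma sigma_E g x : g \in G -> x \in E -> sigma g x \in E.
Proof.
move=> gG; apply: gen_subfield_morph => _ /imsetP[n nN ->].
have gN : g \in 'N(N)%g by apply: (subsetP (normal_norm nNG)).
have kN : (n ^ g)%g \in N by rewrite memJ_norm.
have [P Pu HP] := stab gG.
have e : (g * n ^ g * g^-1)%g = n by rewrite conjgE !mulgA mulgV mul1g mulgK.
have := HP _ kN; rewrite /= e => /mxtrace_sim => /(_ Pu).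
rewrite mxtrace_map_rm => ->; by apply/imsetP; exists (n ^ g)%g.
Qed.

Lemma sigma_surj g y : g \in G -> y \in E -> exists2 x, x \in E & sigma g x = y.
Proof.
move=> gG yE.
have : y \in [set sigma g x | x in E].
  suff -> : [set sigma g x | x in E] = E by [].
  apply/eqP; rewrite eqEcard card_in_imset; last by move=> a b _ _; apply: fmorph_inj.
  rewrite leqnn andbT; apply/subsetP => _ /imsetP[x xE ->]; exact: sigma_E.
by case/imsetP => x xE ->; exists x.
Qed.

Lemma sigma_mx_surj g (M : 'M[F]_m) : g \in G -> mx_over_set E M ->
  exists2 y, mx_over_set E y & map_mx (sigma g) y = M.
Proof.
move=> gG ME.
pose pre e := odflt 0 [pick x in E | sigma g x == e].
have Hpre e : e \in E -> pre e \in E /\ sigma g (pre e) = e.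
  move=> eE; rewrite /pre; case: pickP => [x /andP[xE /eqP ->] //|H].
  by have [x xE ex] := sigma_surj gG eE; have := H x; rewrite xE ex eqxx.
exists (map_mx pre M) => [i j|]; first by rewrite mxE; case: (Hpre _ (ME i j)).
by apply/matrixP => i j; rewrite !mxE; case: (Hpre _ (ME i j)).
Qed.
End Sig.

Section Alg.
Variables (R : finFieldType) (k : nat).

Lemma mx_cancel_l (A X Y : 'M[R]_k) : A \in unitmx -> A *m X = A *m Y -> X = Y.
Proof. by move=> Au /(congr1 (mulmx (invmx A))); rewrite !mulKmx. Qed.
Lemma mx_cancel_r (A X Y : 'M[R]_k) : A \in unitmx -> X *m A = Y *m A -> X = Y.
Proof. by move=> Au /(congr1 (mulmx^~ (invmx A))); rewrite !mulmxK. Qed.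

Lemma alg1 (T1 T2 P sP B : 'M[R]_k) : T1 \in unitmx -> T2 \in unitmx -> P \in unitmx -> sP \in unitmx ->
  sP *m (T2 *m B *m invmx T2) *m invmx sP = T1 *m (P *m B *m invmx P) *m invmx T1 ->
  invmx T2 *m invmx sP *m T1 *m P *m B = B *m (invmx T2 *m invmx sP *m T1 *m P).
Proof.
move=> T1u T2u Pu sPu H.
have H1 := congr1 (mulmx^~ (T1 *m P)) H; move: H1 => /=.
rewrite !mulmxA mulmxKV // mulmxKV // => H1.
apply: (@mx_cancel_l (sP *m T2)); first by rewrite unitmx_mul sPu.
by rewrite !mulmxA mulmxK // mulmxV // mul1mx H1.
Qed.

Lemma alg2 (T1 T2 P sP C : 'M[R]_k) mu : T1 \in unitmx -> T2 \in unitmx -> P \in unitmx -> sP \in unitmx ->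
  invmx T2 *m invmx sP *m T1 *m P = mu%:M ->
  invmx T1 *m (sP *m C *m invmx sP) *m T1 = P *m (invmx T2 *m C *m T2) *m invmx P.
Proof.
move=> T1u T2u Pu sPu H.
have HV : invmx sP *m T1 = T2 *m mu%:M *m invmx P.
  by rewrite -H !mulmxA mulmxV // mul1mx mulmxK.
have Vu : invmx sP *m T1 \in unitmx by rewrite unitmx_mul unitmx_inv sPu.
apply: (mx_cancel_l Vu).
rewrite !mulmxA mulmxK // mulVmx // mul1mx -(mulmxA C) HV !mulmxA mulmxKV //.
rewrite -(mulmxA T2) -scalar_mxC mulmxA mulmxV // mul1mx.
by rewrite mul_scalar_mx mul_mx_scalar !scalemxAl.
Qed.
End Alg.

Ltac mxe := solve [repeat (first [assumption | apply: Esub | apply: mxE_mul | apply: mxE_scalar | apply: mxE_inv])].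

Unset Implicit Arguments. Set Strict Implicit. Set Printing Implicit Defensive.

Theorem mainTheorem10 (p : nat) (F : finFieldType) (gT : finGroupType)
  (G N : {group gT}) (m s : nat) (rX0 : mx_representation F N m)
  (sigma : gT -> {rmorphism F -> F})
  (X1 T1 X2 T2 : gT -> 'M[F]_m)
  (iota1 iota2 : 'M[F]_m -> 'M['F_p]_(m * s))
  (Y1 Y2 : gT -> 'M['F_p]_(m * s)) (alpha1 alpha2 : gT -> gT -> F) :
  prime p -> p \in [pchar F] -> (N <| G)%g ->
  mx_absolutely_irreducible rX0 ->
  #|trace_field rX0| = (p ^ s)%N ->
  stable_orbit_sigma G rX0 sigma ->
  admissible_choice G rX0 sigma X1 T1 iota1 Y1 alpha1 ->
  admissible_choice G rX0 sigma X2 T2 iota2 Y2 alpha2 ->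
  cohomologous G N (trace_field rX0) sigma alpha1 alpha2.
Proof.
move=> pr chF nNG absirr cardE stab adm1 adm2.
have ES := Esub rX0.
case: adm1 => [[X1r X1E X1s] HT1 [i11 i1D i1M i1I] [Y1u Y1c Y1N Y1gN Y1Ng] Ha1].
case: adm2 => [[X2r X2E X2s] HT2 [i21 i2D i2M i2I] [Y2u Y2c Y2N Y2gN Y2Ng] Ha2].
set E := trace_field rX0 in ES cardE X1E X2E HT1 HT2 i1D i1M i1I i2D i2M i2I Y1c Y2c Ha1 Ha2 *.
have i0 := Ordinal (m_gt0 absirr).
have cardV : (#|E| ^ m = p ^ (m * s))%N by rewrite cardE -expnM mulnC.
have [Q Qu HQ] := SN ES pr cardV i0 i11 i1D i1M i1I i21 i2D i2M i2I.
have [P [Pu PE HP]] := descent chF absirr cardE X1E X2E X1s X2s.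
have PiE : mx_over_set E (invmx P) := mxE_inv chF cardE PE.
have mE := mxE_mul ES.
have sE := mxE_scalar ES.
have i2Pu : iota2 P \in unitmx.
  have : iota2 P *m iota2 (invmx P) = 1%:M by rewrite -i2M // mulmxV.
  by case/mulmx1_unit => h _; exact: h.
pose S := Q *m iota2 P.
have Su : S \in unitmx by rewrite unitmx_mul Qu.
have K1 x : mx_over_set E x -> iota1 (P *m x *m invmx P) *m S = S *m iota2 x.
  move=> xE; rewrite /S mulmxA HQ; last by mxe.
  rewrite -!mulmxA -i2M; [|mxe|mxe].
  by rewrite mulmxA mulmxKV // i2M.
clearbody S.
pose Y1' g := invmx S *m Y1 g *m S.
have Y1'u g : g \in G -> Y1' g \in unitmx.
  by move=> gG; rewrite /Y1' !unitmx_mul unitmx_inv Su Y1u.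
have eX n : n \in N -> X1 n = P *m X2 n *m invmx P by move=> nN; rewrite -HP // mulmxK.
have E1 n : n \in N -> Y1' n = Y2 n.
  move=> nN; rewrite /Y1' Y1N // eX // -(mulmxA (invmx S)) K1; last exact: X2E.
  by rewrite mulKmx // Y2N.
have Y1c' g x : g \in G -> mx_over_set E x ->
    iota1 x *m Y1 g = Y1 g *m iota1 (invmx (T1 g) *m map_mx (sigma g) x *m T1 g).
  by move=> gG xE; rewrite -Y1c // !mulmxA mulmxV ?Y1u // mul1mx.
have Y2c' g x : g \in G -> mx_over_set E x ->
    iota2 x *m Y2 g = Y2 g *m iota2 (invmx (T2 g) *m map_mx (sigma g) x *m T2 g).
  by move=> gG xE; rewrite -Y2c // !mulmxA mulmxV ?Y2u // mul1mx.
have nGN g : g \in G -> g \in 'N(N)%g by apply: (subsetP (normal_norm nNG)).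
have mapE g x : g \in G -> mx_over_set E x -> mx_over_set E (map_mx (sigma g) x).
  by move=> gG xE i j; rewrite mxE (sigma_E nNG stab).
have Wl g : g \in G -> exists mu,
    invmx (T2 g) *m invmx (map_mx (sigma g) P) *m T1 g *m P = mu%:M.
  move=> gG; case: (HT1 g gG) => T1E T1u HT1g; case: (HT2 g gG) => T2E T2u HT2g.
  apply: (schur_sim absirr X2s) => n nN.
  apply: (@alg1 F m (T1 g) (T2 g) P (map_mx (sigma g) P) (X2 n) T1u T2u Pu); first by rewrite map_unitmx.
  have kN : (g * n * g^-1)%g \in N.
    by rewrite -mulgA -[g in (g * _)%g]invgK -conjgE memJ_norm // groupV nGN.
  by rewrite -(eX n nN) -HT1g // -HT2g // (eX _ kN) !map_mxM map_invmx.
have E2 g y : g \in G -> mx_over_set E y ->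
    iota2 y *m Y1' g = Y1' g *m iota2 (invmx (T2 g) *m map_mx (sigma g) y *m T2 g).
  move=> gG yE; case: (HT1 g gG) => T1E T1u HT1g; case: (HT2 g gG) => T2E T2u HT2g.
  have [mu Hmu] := Wl g gG.
  have KZ : invmx (T1 g) *m map_mx (sigma g) (P *m y *m invmx P) *m T1 g
      = P *m (invmx (T2 g) *m map_mx (sigma g) y *m T2 g) *m invmx P.
    rewrite !map_mxM map_invmx; apply: alg2 Hmu => //; by rewrite map_unitmx.
  have ey : iota2 y = invmx S *m iota1 (P *m y *m invmx P) *m S.
    by rewrite -mulmxA K1 // mulKmx.
  rewrite ey /Y1' !mulmxA mulmxK // -(mulmxA _ (iota1 _)) Y1c' //; last by mxe.
  rewrite KZ -[LHS]mulmxA -(mulmxA (Y1 g)) K1; first by rewrite !mulmxA.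
  by do ![assumption | apply: (mxE_mul ES) | apply: mapE | apply: (mxE_inv chF cardE)].
have sE' c : c \in E -> mx_over_set E (c%:M : 'M_m) by move=> cE; apply: (mxE_scalar ES).
have E3 g c : g \in G -> c \in E ->
    iota2 c%:M *m Y1' g = Y1' g *m iota2 (sigma g c)%:M.
  move=> gG cE; case: (HT2 g gG) => _ T2u _; rewrite E2 //; last exact: sE'.
  by rewrite map_scalar_mx scalar_mxC mulmxKV.
have K1s c : c \in E -> iota1 c%:M *m S = S *m iota2 c%:M.
  move=> cE; rewrite -K1; last exact: sE' c cE.
  by rewrite scalar_mxC (mulmxK Pu).
have E5 g n : g \in G -> n \in N -> Y1' (g * n)%g = Y1' g *m Y2 n.
  move=> gG nN; rewrite -(E1 n nN) /Y1' Y1gN // !mulmxA mulmxK //.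
have E4 g h : g \in G -> h \in G -> alpha1 g h \in E ->
    Y1 g *m Y1 h = Y1 (g * h)%g *m iota1 (alpha1 g h)%:M ->
    Y1' g *m Y1' h = Y1' (g * h)%g *m iota2 (alpha1 g h)%:M.
  move=> gG hG a1E e1; rewrite /Y1' !mulmxA (mulmxK Su (invmx S *m Y1 g)).
  rewrite -(mulmxA (invmx S) (Y1 g) (Y1 h)) e1 (mulmxA (invmx S) (Y1 (g * h)%g)).
  by rewrite -(mulmxA _ (iota1 _) S) (K1s _ a1E) mulmxA.
clearbody Y1'.
have [v2 [v2nz v2P]] := frame_exists ES i2D i2M i2I i0.
have Dc g : g \in G -> exists2 d, d \in E & invmx (Y1' g) *m Y2 g = iota2 d%:M.
  move=> gG; apply: (frame_center ES pr cardV i21 i2D i2M v2nz v2P) => z zE.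
  case: (HT2 g gG) => T2E T2u _.
  have [y yE hy] : exists2 y, mx_over_set E y & map_mx (sigma g) y = T2 g *m z *m invmx (T2 g).
    apply: (sigma_mx_surj nNG stab gG).
    by do ![assumption | apply: (mxE_mul ES) | apply: (mxE_inv chF cardE)].
  have ez : invmx (T2 g) *m map_mx (sigma g) y *m T2 g = z.
    by rewrite hy !mulmxA mulVmx // mul1mx mulmxKV.
  have h1 := E2 g y gG yE; rewrite ez in h1.
  have h2 := Y2c' g y gG yE; rewrite ez in h2.
  have h3 : invmx (Y1' g) *m iota2 y = iota2 z *m invmx (Y1' g).
    apply: (mx_cancel_r (Y1'u g gG)); rewrite -mulmxA h1 mulKmx ?mulmxKV //; exact: Y1'u.
  by rewrite -mulmxA -h2 mulmxA h3 mulmxA.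
pose dd g := odflt 0 [pick d in E | invmx (Y1' g) *m Y2 g == iota2 d%:M].
have Hd g : g \in G -> dd g \in E /\ Y2 g = Y1' g *m iota2 (dd g)%:M.
  move=> gG; rewrite /dd; case: pickP => [d /andP[dE /eqP hd]|H].
    by split => //; rewrite -hd mulKVmx // Y1'u.
  by have [d dE hd] := Dc g gG; have := H d; rewrite dE hd eqxx.
clearbody dd.
have ddnz g : g \in G -> dd g != 0.
  move=> gG; apply/eqP => d0; have [_ h] := Hd g gG; move: (Y2u g gG).
  rewrite h d0 (_ : (0 : F)%:M = 0); last by apply/matrixP => i j; rewrite !mxE mul0rn.
  rewrite (iota0 ES i2D) mulmx0 => u0; have := mulmxV u0; rewrite mul0mx => e.
  by move/eqP: v2nz; apply; rewrite -[v2]mulmx1 -e mulmx0.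
have NG : N \subset G by apply: normal_sub.
have ddN g n : g \in G -> n \in N -> dd (g * n)%g = dd g.
  move=> gG nN; have gnG : (g * n)%g \in G by rewrite groupM // (subsetP NG).
  have [dgE hg] := Hd g gG; have [dgnE hgn] := Hd _ gnG.
  apply: (Ms_inj ES i2I i0 dgnE dgE); apply: (mx_cancel_l (Y1'u _ gnG)).
  rewrite -hgn (Y2gN g n gG nN) hg -mulmxA (Y2N n nN) (Ms_comm ES i2M dgE (X2E n nN)).
  by rewrite -(Y2N n nN) mulmxA (E5 g n gG nN).
pose gam (x : coset_of N) := dd (repr x).
have gamE g : g \in G -> gam (coset N g) = dd g.
  move=> gG; rewrite /gam; have := mem_repr_coset (coset N g).
  rewrite val_coset ?nGN //; case/rcosetP => n nN ->.
  by rewrite conjgC ddN // memJ_norm // nGN.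
exists gam; split.
  move=> x /morphimP[g gNN gG ->]; rewrite (gamE g gG); split; last exact: ddnz.
  by case: (Hd g gG).
move=> g h gG hG; have ghG := groupM gG hG.
rewrite (gamE g gG) (gamE h hG) (gamE _ ghG).
have [dgE hg] := Hd g gG; have [dhE hh] := Hd h hG; have [dghE hgh] := Hd _ ghG.
have [a1E a1nz e1] := Ha1 g h gG hG; have [a2E a2nz e2] := Ha2 g h gG hG.
have sgE : sigma h (dd g) \in E := sigma_E nNG stab hG dgE.
have L : Y2 g *m Y2 h = Y1' (g * h)%g *m iota2 (alpha1 g h * sigma h (dd g) * dd h)%:M.
  rewrite hg hh -mulmxA (mulmxA (iota2 _)) (E3 h (dd g) hG dgE) !mulmxA (E4 g h gG hG a1E e1) -!mulmxA.
  by rewrite (Ms_mul ES i2M sgE dhE) (Ms_mul ES i2M a1E (EM ES sgE dhE)) mulrA.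
have R : Y2 g *m Y2 h = Y1' (g * h)%g *m iota2 (dd (g * h)%g * alpha2 g h)%:M.
  by rewrite e2 hgh -mulmxA (Ms_mul ES i2M dghE a2E).
have := L; rewrite R => /(mx_cancel_l (Y1'u _ ghG)).
move/(Ms_inj ES i2I i0 (EM ES dghE a2E) (EM ES (EM ES a1E sgE) dhE)) => key.
by rewrite -key [dd _ * _]mulrC (mulfK (ddnz _ ghG)).
Qed.
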